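(* Let $\{(\mathbf{x}^k,\mathbf{r}^k,\boldsymbol{\lambda}^k)\}$ be generated by Algorithm 1 and $k\ge 0$. Then for any $\mathbf{x}$ independent of $i_k$ with $\mathbf{A}\mathbf{x}=\mathbf{b}$, $$\begin{aligned}&\mathbb{E}_{i_k}\Big[F(\mathbf{x}^{k+1})-F(\mathbf{x})-\langle\boldsymbol{\lambda}^{k+1},\mathbf{r}^{k+1}\rangle+(\beta-\rho)\|\mathbf{r}^{k+1}\|^2-\tfrac{\beta}{2}\|\mathbf{r}^{k+1}\|^2\Big]+\tfrac12\mathbb{E}_{i_k}\Big[\|\mathbf{x}^{k+1}-\mathbf{x}\|_{\mathbf{P}}^2+\|\mathbf{x}^{k+1}-\mathbf{x}^k\|_{\mathbf{P}-\mathbf{L}-\beta\mathbf{A}^\top\mathbf{A}}^2\Big]\\ &\le\Big(1-\frac1m\Big)\Big[F(\mathbf{x}^k)-F(\mathbf{x})-\langle\boldsymbol{\lambda}^k,\mathbf{r}^k\rangle+\beta\|\mathbf{r}^k\|^2\Big]-\tfrac{\beta}{2}\|\mathbf{r}^k\|^2+\tfrac12\|\mathbf{x}^k-\mathbf{x}\|_{\mathbf{P}}^2,\end{aligned}$$ where $\mathbf{P}=\mathrm{blkdiag}(\mathbf{P}_1,\ldots,\mathbf{P}_m)$ (here $\|\mathbf{z}\|_{\mathbf{M}}^2:=\mathbf{z}^\top\mathbf{M}\mathbf{z}$ for any symmetric $\mathbf{M}$).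
   Context: Problem: $\min_{\mathbf{x}} F(\mathbf{x}):=f(\mathbf{x})+g(\mathbf{x})$ s.t. $\mathbf{A}\mathbf{x}=\mathbf{b}$, where $\mathbf{x}=(\mathbf{x}_1;\ldots;\mathbf{x}_m)$ with blocks $\mathbf{x}_i\in\mathbb{R}^{n_i}$, $g(\mathbf{x})=\sum_{i=1}^m g_i(\mathbf{x}_i)$, $\mathbf{A}=[\mathbf{A}_1,\ldots,\mathbf{A}_m]$ with $\mathbf{A}_i\in\mathbb{R}^{q\times n_i}$, $\mathbf{b}\in\mathbb{R}^q$; $f$ is convex and continuously differentiable, each $g_i$ is proper, convex, lower semicontinuous. $\nabla_i f$ denotes the partial gradient w.r.t. block $i$; $\mathbf{U}_i\mathbf{y}$ denotes the vector whose $i$-th block is $\mathbf{y}_i$ and other blocks zero. Assumption (gradient Lipschitz continuity): there are constants $L_i>0$ and $L_r$ with $\|\nabla_i f(\mathbf{x}+\mathbf{U}_i\mathbf{y})-\nabla_i f(\mathbf{x})\|\le L_i\|\mathbf{y}_i\|$ and $\|\nabla f(\mathbf{x}+\mathbf{U}_i\mathbf{y})-\nabla f(\mathbf{x})\|\le L_r\|\mathbf{y}_i\|$ for all $i,\mathbf{x},\mathbf{y}$. $\mathbf{L}=\mathrm{blkdiag}(L_1\mathbf{I}_{n_1},\ldots,L_m\mathbf{I}_{n_m})$. Algorithm 1 (randomized primal-dual block update): choose $\mathbf{x}^0$, set $\boldsymbol{\lambda}^0=\mathbf{0}$, $\mathbf{r}^0=\mathbf{A}\mathbf{x}^0-\mathbf{b}$,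 parameters $\beta>0,\rho>0$, symmetric PSD matrices $\mathbf{P}_i\in\mathbb{R}^{n_i\times n_i}$. For $k=0,1,\ldots$: pick $i_k\in\{1,\ldots,m\}$ uniformly at random, independent of $i_0,\ldots,i_{k-1}$; set $\mathbf{x}_i^{k+1}=\mathbf{x}_i^k$ for $i\ne i_k$ and $$\mathbf{x}_{i_k}^{k+1}\in\arg\min_{\mathbf{x}_{i_k}}\big\langle\nabla_{i_k} f(\mathbf{x}^k)-\mathbf{A}_{i_k}^\top(\boldsymbol{\lambda}^k-\beta\mathbf{r}^k),\mathbf{x}_{i_k}\big\rangle+g_{i_k}(\mathbf{x}_{i_k})+\tfrac12\|\mathbf{x}_{i_k}-\mathbf{x}_{i_k}^k\|_{\mathbf{P}_{i_k}}^2;$$ then $\mathbf{r}^{k+1}=\mathbf{r}^k+\mathbf{A}_{i_k}(\mathbf{x}_{i_k}^{k+1}-\mathbf{x}_{i_k}^k)$ (so $\mathbf{r}^k=\mathbf{A}\mathbf{x}^k-\mathbf{b}$) and $\boldsymbol{\lambda}^{k+1}=\boldsymbol{\lambda}^k-\rho\mathbf{r}^{k+1}$. $\mathbb{E}_{i_k}$ denotes expectation over $i_k$ conditional on $i_0,\ldots,i_{k-1}$; ''$\mathbf{x}$ independent of $i_k$'' means $\mathbf{x}$ is determined by $i_0,\ldots,i_{k-1}$ (e.g. deterministic). *)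

(* Defs.v *)
From Stdlib Require Import Reals.
From mathcomp Require Import ssreflect ssrfun ssrbool eqtype ssrnat seq fintype bigop.
Set Implicit Arguments. Unset Printing Implicit Defensive.
Open Scope R_scope.

Definition sumo (k : nat) (F : 'I_k -> R) : R := \big[Rplus/R0]_(i < k) F i.

Definition vec (k : nat) := 'I_k -> R.
Definition ipv (k : nat) (u v : vec k) : R := sumo (fun a => u a * v a).
Definition normv (k : nat) (u : vec k) : R := sqrt (ipv u u).
Definition vadd (k : nat) (u v : vec k) : vec k := fun a => u a + v a.
Definition vsub (k : nat) (u v : vec k) : vec k := fun a => u a - v a.
Definition vscale (k : nat) (t : R) (u : vec k) : vec k := fun a => t * u a.
Definition qformv (k : nat) (M : 'I_k -> 'I_k -> R) (v : vec k) : R :=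
  sumo (fun a => sumo (fun c => v a * M a c * v c)).

Definition bvec (m : nat) (n : 'I_m -> nat) := forall i : 'I_m, vec (n i).
Definition ipb (m : nat) (n : 'I_m -> nat) (x y : bvec n) : R :=
  sumo (fun i => ipv (x i) (y i)).
Definition normb (m : nat) (n : 'I_m -> nat) (x : bvec n) : R := sqrt (ipb x x).
Definition badd (m : nat) (n : 'I_m -> nat) (x y : bvec n) : bvec n :=
  fun i a => x i a + y i a.
Definition bsub (m : nat) (n : 'I_m -> nat) (x y : bvec n) : bvec n :=
  fun i a => x i a - y i a.
Definition bscale (m : nat) (n : 'I_m -> nat) (t : R) (x : bvec n) : bvec n :=
  fun i a => t * x i a.

Definition setblk (m : nat) (n : 'I_m -> nat) (x : bvec n) (i : 'I_m)
  (v : vec (n i)) : bvec n :=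
  fun j => match @eqP _ i j with
           | ReflectT e => eq_rect i (fun k => vec (n k)) v j e
           | ReflectF _ => x j
           end.
(* x + U_i y  (only block i of y matters, so y is given as y_i) *)
Definition addblk (m : nat) (n : 'I_m -> nat) (x : bvec n) (i : 'I_m)
  (y : vec (n i)) : bvec n := setblk x i (vadd (x i) y).

Definition bmat (m : nat) (n : 'I_m -> nat) :=
  forall i j : 'I_m, 'I_(n i) -> 'I_(n j) -> R.
Definition qformb (m : nat) (n : 'I_m -> nat) (M : bmat n) (x : bvec n) : R :=
  sumo (fun i => sumo (fun j => sumo (fun a => sumo (fun c =>
     x i a * M i j a c * x j c)))).
Definition bmsub (m : nat) (n : 'I_m -> nat) (M N : bmat n) : bmat n :=
  fun i j a c => M i j a c - N i j a c.
Definition bmscale (m : nat) (n : 'I_m -> nat) (t : R) (M : bmat n) : bmat n :=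
  fun i j a c => t * M i j a c.
Definition blkdiag (m : nat) (n : 'I_m -> nat)
  (D : forall i : 'I_m, 'I_(n i) -> 'I_(n i) -> R) : bmat n :=
  fun i j a c => match @eqP _ i j with
                 | ReflectT e => D i a (eq_rect j (fun k => 'I_(n k)) c i (esym e))
                 | ReflectF _ => 0
                 end.
Definition Lmat (m : nat) (n : 'I_m -> nat) (Lc : 'I_m -> R) : bmat n :=
  @blkdiag m n (fun (i : 'I_m) (a c : 'I_(n i)) => if a == c then Lc i else 0).

(* A = [A_1, ..., A_m], A_i in R^{q x n_i}; stored as A i l a = (A_i)_{l a} *)
Definition blkA (m : nat) (n : 'I_m -> nat) (q : nat) :=
  forall i : 'I_m, 'I_q -> 'I_(n i) -> R.
Definition Amul (m : nat) (n : 'I_m -> nat) (q : nat) (A : blkA n q) (x : bvec n)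
  : vec q := fun l => sumo (fun i => sumo (fun a => A i l a * x i a)).
Definition Aimul (m : nat) (n : 'I_m -> nat) (q : nat) (A : blkA n q) (i : 'I_m)
  (v : vec (n i)) : vec q := fun l => sumo (fun a => A i l a * v a).
Definition AiT (m : nat) (n : 'I_m -> nat) (q : nat) (A : blkA n q) (i : 'I_m)
  (w : vec q) : vec (n i) := fun a => sumo (fun l => A i l a * w l).
Definition AtA (m : nat) (n : 'I_m -> nat) (q : nat) (A : blkA n q) : bmat n :=
  fun i j a c => sumo (fun l => A i l a * A j l c).

Definition convex_fun (m : nat) (n : 'I_m -> nat) (f : bvec n -> R) : Prop :=
  forall x y t, 0 <= t <= 1 ->
    f (badd (bscale t x) (bscale (1 - t) y)) <= t * f x + (1 - t) * f y.
Definition has_gradient (m : nat) (n : 'I_m -> nat) (f : bvec n -> R)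
  (gradf : bvec n -> bvec n) : Prop :=
  forall x eps, 0 < eps -> exists delta, 0 < delta /\
    forall h, normb h < delta ->
      Rabs (f (badd x h) - f x - ipb (gradf x) h) <= eps * normb h.
Definition continuous_grad (m : nat) (n : 'I_m -> nat) (gradf : bvec n -> bvec n)
  : Prop :=
  forall x eps, 0 < eps -> exists delta, 0 < delta /\
    forall y, normb (bsub y x) < delta -> normb (bsub (gradf y) (gradf x)) < eps.
Definition grad_lipschitz (m : nat) (n : 'I_m -> nat) (gradf : bvec n -> bvec n)
  (Lc : 'I_m -> R) (Lr : R) : Prop :=
  (forall i, 0 < Lc i) /\
  (forall (x : bvec n) (i : 'I_m) (y : vec (n i)),
     normv (vsub (gradf (addblk x i y) i) (gradf x i)) <= Lc i * normv y) /\
  (forall (x : bvec n) (i : 'I_m) (y : vec (n i)),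
     normb (bsub (gradf (addblk x i y)) (gradf x)) <= Lr * normv y).

(* ---------- extended-valued g_i : R^k -> R U {+oo} ----------
   represented by a domain predicate dom and a real value g on dom
   (g = +oo outside dom). *)
Definition proper_ext (k : nat) (dom : vec k -> Prop) : Prop := exists y, dom y.
Definition convex_ext (k : nat) (dom : vec k -> Prop) (g : vec k -> R) : Prop :=
  forall y z t, dom y -> dom z -> 0 <= t <= 1 ->
    dom (vadd (vscale t y) (vscale (1 - t) z)) /\
    g (vadd (vscale t y) (vscale (1 - t) z)) <= t * g y + (1 - t) * g z.
(* lower semicontinuity: for u_t -> y and every M < g(y) (M arbitrary if
   g(y) = +oo), eventually M < g(u_t) (automatic when u_t is outside dom). *)
Definition lsc_ext (k : nat) (dom : vec k -> Prop) (g : vec k -> R) : Prop :=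
  forall (y : vec k) (u : nat -> vec k),
    (forall a, Un_cv (fun t => u t a) (y a)) ->
    forall M, (dom y -> M < g y) ->
      exists N, forall t, (N <= t)%nat -> dom (u t) -> M < g (u t).

Definition sym_psd (k : nat) (M : 'I_k -> 'I_k -> R) : Prop :=
  (forall a c, M a c = M c a) /\ (forall v, 0 <= qformv M v).

Definition Fobj (m : nat) (n : 'I_m -> nat) (f : bvec n -> R)
  (g : forall i : 'I_m, vec (n i) -> R) (x : bvec n) : R :=
  f x + sumo (fun i => g i (x i)).

Record state (m : nat) (n : 'I_m -> nat) (q : nat) :=
  St { sx : bvec n; sr : vec q; sl : vec q }.

Definition subobj (m : nat) (n : 'I_m -> nat) (q : nat)
  (gradf : bvec n -> bvec n) (g : forall i : 'I_m, vec (n i) -> R)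
  (A : blkA n q) (beta : R) (P : forall i : 'I_m, 'I_(n i) -> 'I_(n i) -> R)
  (s : state n q) (i : 'I_m) (u : vec (n i)) : R :=
  ipv (vsub (gradf (sx s) i)
            (AiT A i (vsub (sl s) (vscale beta (sr s))))) u
  + g i u + / 2 * qformv (P i) (vsub u (sx s i)).

(* z is a minimizer (over R^(n i), with g_i = +oo off dom i) *)
Definition is_argmin_blk (m : nat) (n : 'I_m -> nat) (q : nat)
  (gradf : bvec n -> bvec n) (g : forall i : 'I_m, vec (n i) -> R)
  (dom : forall i : 'I_m, vec (n i) -> Prop)
  (A : blkA n q) (beta : R) (P : forall i : 'I_m, 'I_(n i) -> 'I_(n i) -> R)
  (s : state n q) (i : 'I_m) (z : vec (n i)) : Prop :=
  dom i z /\
  forall u, dom i u -> subobj gradf g A beta P s i z <= subobj gradf g A beta P s i u.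

Definition alg_step (m : nat) (n : 'I_m -> nat) (q : nat)
  (A : blkA n q) (rho : R) (s : state n q) (i : 'I_m) (z : vec (n i))
  : state n q :=
  let x1 := setblk (sx s) i z in
  let r1 := vadd (sr s) (Aimul A i (vsub z (sx s i))) in
  let l1 := vsub (sl s) (vscale rho r1) in
  St x1 r1 l1.

(* iterate after the index history h (most recent index first);
   sel h i is the minimizer chosen when i is drawn after history h *)
Fixpoint alg_traj (m : nat) (n : 'I_m -> nat) (q : nat)
  (A : blkA n q) (b : vec q) (rho : R) (x0 : bvec n)
  (sel : seq 'I_m -> forall i : 'I_m, vec (n i)) (h : seq 'I_m) : state n q :=
  match h with
  | [::] => St x0 (vsub (Amul A x0) b) (fun _ => 0)
  | i :: h' => alg_step A rho (alg_traj A b rho x0 sel h') i (sel h' i)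
  end.

(* conditional expectation over i_k uniform on {1..m} *)
Definition Eunif (m : nat) (Q : 'I_m -> R) : R := / INR m * sumo Q.

(* Main.v *)
Require Import Defs.
From HB Require Import structures.
From Stdlib Require Import Reals Lra Psatz FunctionalExtensionality.
From mathcomp Require Import ssreflect ssrfun ssrbool eqtype ssrnat seq fintype bigop.
Open Scope R_scope.

HB.instance Definition _ := Monoid.isComLaw.Build R R0 Rplus (fun a b c => esym (Rplus_assoc a b c)) Rplus_comm Rplus_0_l.

Section S.
Variable k : nat.
Implicit Types F G : 'I_k -> R.

Lemma sumo_ext F G : (forall i, F i = G i) -> sumo F = sumo G.
Proof. move=> H; apply: eq_bigr => i _; exact: H. Qed.

Lemma sumo_add F G : sumo (fun i => F i + G i) = sumo F + sumo G.
Proof. exact: big_split. Qed.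

Lemma sumo_scal c F : sumo (fun i => c * F i) = c * sumo F.
Proof.
rewrite /sumo; elim/big_rec2: _ => [|i y1 y2 _ ->]; ring.
Qed.

Lemma sumo_opp F : sumo (fun i => - F i) = - sumo F.
Proof.
rewrite /sumo; elim/big_rec2: _ => [|i y1 y2 _ ->]; ring.
Qed.

Lemma sumo_sub F G : sumo (fun i => F i - G i) = sumo F - sumo G.
Proof. by rewrite /Rminus sumo_add sumo_opp. Qed.

Lemma sumo_le F G : (forall i, F i <= G i) -> sumo F <= sumo G.
Proof.
move=> H; rewrite /sumo; apply: (big_ind2 (fun a b => a <= b)); [lra | move=> *; lra | move=> i _; exact: H].
Qed.

Lemma sumo_0 : sumo (fun _ : 'I_k => 0) = 0.
Proof. rewrite /sumo; elim/big_rec: _ => // *; lra. Qed.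

Lemma sumo_delta F i : (forall j, j != i -> F j = 0) -> sumo F = F i.
Proof.
move=> H; rewrite /sumo (bigD1 i) //= big1; first by rewrite Rplus_0_r.
move=> j; exact: H.
Qed.

Lemma sumo_upd F G i : (forall j, j != i -> F j = G j) -> sumo G = sumo F - F i + G i.
Proof.
move=> H; rewrite /sumo (bigD1 i) //= [in RHS](bigD1 i) //=.
rewrite (eq_bigr (fun j => F j)); last by move=> j /H.
ring.
Qed.

Lemma sumo_const c : sumo (fun _ : 'I_k => c) = INR k * c.
Proof.
rewrite /sumo big_const card_ord; elim: k => [|j IH] /=; first ring.
rewrite IH. case: j {IH} => [|j] /=; ring.
Qed.
End S.

Lemma sumo_swap k l (F : 'I_k -> 'I_l -> R) :
  sumo (fun i => sumo (fun j => F i j)) = sumo (fun j => sumo (fun i => F i j)).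
Proof. exact: exchange_big. Qed.

Section Blk.
Variables (m : nat) (n : 'I_m -> nat).

Lemma setblk_eq (x : bvec n) i v : setblk x i v i = v.
Proof.
rewrite /setblk; case: eqP => // e.
by rewrite (eq_irrelevance e erefl).
Qed.

Lemma setblk_ne (x : bvec n) i v j : i != j -> setblk x i v j = x j.
Proof.
move=> ne; rewrite /setblk; case: eqP => // e.
by rewrite e eqxx in ne.
Qed.

Lemma blkdiag_ii (D : forall i : 'I_m, 'I_(n i) -> 'I_(n i) -> R) i a c :
  blkdiag n D i i a c = D i a c.
Proof.
rewrite /blkdiag; case: eqP => // e.
by rewrite (eq_irrelevance e erefl).
Qed.

Lemma blkdiag_ne (D : forall i : 'I_m, 'I_(n i) -> 'I_(n i) -> R) i j a c :
  i != j -> blkdiag n D i j a c = 0.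
Proof.
move=> ne; rewrite /blkdiag; case: eqP => // e.
by rewrite e eqxx in ne.
Qed.
End Blk.

Section Vec.
Variable k : nat.
Implicit Types (u v w : vec k) (M : 'I_k -> 'I_k -> R).

Lemma ipv_sym u v : ipv u v = ipv v u.
Proof. apply: sumo_ext => a; ring. Qed.
Lemma ipv_add_r u v w : ipv u (vadd v w) = ipv u v + ipv u w.
Proof. rewrite /ipv -sumo_add; apply: sumo_ext => a; rewrite /vadd; ring. Qed.
Lemma ipv_sub_r u v w : ipv u (vsub v w) = ipv u v - ipv u w.
Proof. rewrite /ipv -sumo_sub; apply: sumo_ext => a; rewrite /vsub; ring. Qed.
Lemma ipv_add_l u v w : ipv (vadd v w) u = ipv v u + ipv w u.
Proof. rewrite /ipv -sumo_add; apply: sumo_ext => a; rewrite /vadd; ring. Qed.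
Lemma ipv_sub_l u v w : ipv (vsub v w) u = ipv v u - ipv w u.
Proof. rewrite /ipv -sumo_sub; apply: sumo_ext => a; rewrite /vsub; ring. Qed.
Lemma ipv_scal_l t u v : ipv (vscale t u) v = t * ipv u v.
Proof. rewrite /ipv -sumo_scal; apply: sumo_ext => a; rewrite /vscale; ring. Qed.
Lemma ipv_scal_r t u v : ipv u (vscale t v) = t * ipv u v.
Proof. rewrite /ipv -sumo_scal; apply: sumo_ext => a; rewrite /vscale; ring. Qed.
Lemma ipv_ext u u' v v' : (forall a, u a = u' a) -> (forall a, v a = v' a) ->
  ipv u v = ipv u' v'.
Proof. move=> H1 H2; apply: sumo_ext => a; by rewrite H1 H2. Qed.
Lemma ipv_ge0 u : 0 <= ipv u u.
Proof.
rewrite -(sumo_0 k); apply: sumo_le => a; exact: Rle_0_sqr.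
Qed.
Lemma ipv_diff (u a b c : vec k) : ipv u a - ipv u b = ipv u (vsub a c) - ipv u (vsub b c).
Proof. rewrite !ipv_sub_r; ring. Qed.

Definition Bq (M : 'I_k -> 'I_k -> R) (a c : vec k) : R :=
  sumo (fun i => sumo (fun j => a i * M i j * c j)).

Lemma qform_ext M u v : (forall a, u a = v a) -> qformv M u = qformv M v.
Proof. move=> H; apply: sumo_ext => a; apply: sumo_ext => c; by rewrite !H. Qed.

Lemma qform_neg M (a b : vec k) : qformv M (vsub a b) = qformv M (vsub b a).
Proof. apply: sumo_ext => i; apply: sumo_ext => j; rewrite /vsub; ring. Qed.

Lemma qform_expand M (a c : vec k) t :
  qformv M (fun i => a i + t * c i) =
  qformv M a + t * (Bq M a c + Bq M c a) + t * t * qformv M c.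
Proof.
rewrite /qformv /Bq.
transitivity (sumo (fun i => sumo (fun j => a i * M i j * a j)
   + t * (sumo (fun j => a i * M i j * c j) + sumo (fun j => c i * M i j * a j))
   + t * t * sumo (fun j => c i * M i j * c j))).
  apply: sumo_ext => i.
  do 4 rewrite -?sumo_scal -?sumo_add.
  apply: sumo_ext => j; ring.
do 4 rewrite ?sumo_add ?sumo_scal.
done.
Qed.

Lemma Bq_sym M (a c : vec k) : (forall i j, M i j = M j i) -> Bq M c a = Bq M a c.
Proof.
move=> HM; rewrite /Bq sumo_swap; apply: sumo_ext => i; apply: sumo_ext => j.
rewrite HM; ring.
Qed.
End Vec.
Arguments Bq {k}.

Lemma sumo_eq0 k (F : 'I_k -> R) : (forall i, F i = 0) -> sumo F = 0.
Proof. move=> H; rewrite -(sumo_0 k); exact: sumo_ext. Qed.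

Lemma sumo_mul k l (F : 'I_k -> R) (G : 'I_l -> R) :
  sumo F * sumo G = sumo (fun a => sumo (fun c => F a * G c)).
Proof.
rewrite Rmult_comm -sumo_scal; apply: sumo_ext => a.
rewrite Rmult_comm -sumo_scal; apply: sumo_ext => c; ring.
Qed.

Section Blk2.
Variables (m : nat) (n : 'I_m -> nat) (q : nat).

Lemma qformb_blkdiag (D : forall i : 'I_m, 'I_(n i) -> 'I_(n i) -> R) (y : bvec n) :
  qformb (blkdiag n D) y = sumo (fun i => qformv (D i) (y i)).
Proof.
apply: sumo_ext => i.
rewrite (sumo_delta _ _ i).
  apply: sumo_ext => a; apply: sumo_ext => c; by rewrite blkdiag_ii.
move=> j ne; apply: sumo_eq0 => a; apply: sumo_eq0 => c.
rewrite blkdiag_ne; first ring.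
by rewrite eq_sym.
Qed.

Lemma qformb_sub (M N : bmat n) y : qformb (bmsub M N) y = qformb M y - qformb N y.
Proof.
rewrite /qformb -sumo_sub; apply: sumo_ext => i; rewrite -sumo_sub; apply: sumo_ext => j.
rewrite -sumo_sub; apply: sumo_ext => a; rewrite -sumo_sub; apply: sumo_ext => c.
rewrite /bmsub; ring.
Qed.

Lemma qformb_scal t (M : bmat n) y : qformb (bmscale t M) y = t * qformb M y.
Proof.
rewrite /qformb -sumo_scal; apply: sumo_ext => i; rewrite -sumo_scal; apply: sumo_ext => j.
rewrite -sumo_scal; apply: sumo_ext => a; rewrite -sumo_scal; apply: sumo_ext => c.
rewrite /bmscale; ring.
Qed.

Lemma qformv_diag k (L : R) (v : vec k) :
  qformv (fun a c : 'I_k => if a == c then L else 0) v = L * ipv v v.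
Proof.
rewrite /ipv -sumo_scal; apply: sumo_ext => a.
rewrite (sumo_delta _ _ a); first by rewrite eqxx; ring.
move=> c ne; rewrite eq_sym (negbTE ne); ring.
Qed.

Lemma qformv_zero k (M : 'I_k -> 'I_k -> R) (v : vec k) :
  (forall a, v a = 0) -> qformv M v = 0.
Proof.
move=> H; apply: sumo_eq0 => a; apply: sumo_eq0 => c; rewrite !H; ring.
Qed.

Lemma qformb_single_diag (D : forall i : 'I_m, 'I_(n i) -> 'I_(n i) -> R) (y : bvec n) i :
  (forall j, j != i -> forall a, y j a = 0) ->
  qformb (blkdiag n D) y = qformv (D i) (y i).
Proof.
move=> H; rewrite qformb_blkdiag (sumo_delta _ _ i) // => j ne.
exact: qformv_zero (H j ne).
Qed.

Lemma qformb_single_AtA (A : blkA n q) (y : bvec n) i :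
  (forall j, j != i -> forall a, y j a = 0) ->
  qformb (AtA A) y = ipv (Aimul A i (y i)) (Aimul A i (y i)).
Proof.
move=> H; rewrite /qformb (sumo_delta _ _ i); last first.
  move=> j ne; apply: sumo_eq0 => j'; apply: sumo_eq0 => a; apply: sumo_eq0 => c.
  rewrite H //; ring.
rewrite (sumo_delta _ _ i); last first.
  move=> j ne; apply: sumo_eq0 => a; apply: sumo_eq0 => c.
  rewrite (H j ne); ring.
rewrite /ipv /Aimul /AtA.
transitivity (sumo (fun l => sumo (fun a => sumo (fun c =>
   (A i l a * y i a) * (A i l c * y i c))))); last first.
  apply: sumo_ext => l; by rewrite sumo_mul.
transitivity (sumo (fun a => sumo (fun l => sumo (fun c =>
   (A i l a * y i a) * (A i l c * y i c))))); last by rewrite sumo_swap.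
apply: sumo_ext => a.
transitivity (sumo (fun c => sumo (fun l =>
   (A i l a * y i a) * (A i l c * y i c)))); last by rewrite sumo_swap.
apply: sumo_ext => c.
rewrite Rmult_comm -sumo_scal -sumo_scal.
apply: sumo_ext => l; ring.
Qed.

Lemma sumo_setblk (x : bvec n) i (z : vec (n i)) (G : forall j : 'I_m, vec (n j) -> R) :
  sumo (fun j => G j (setblk x i z j)) = sumo (fun j => G j (x j)) - G i (x i) + G i z.
Proof.
rewrite (sumo_upd _ (fun j => G j (x j)) _ i) ?setblk_eq // => j ne.
by rewrite setblk_ne // eq_sym.
Qed.

Lemma Amul_setblk (A : blkA n q) (x : bvec n) i (z : vec (n i)) l :
  Amul A (setblk x i z) l = Amul A x l + Aimul A i (vsub z (x i)) l.
Proof.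
rewrite /Amul (sumo_setblk x i z (fun j v => sumo (fun a => A j l a * v a))).
rewrite /Aimul /vsub.
have -> : sumo (fun a => A i l a * (z a - x i a)) =
  sumo (fun a => A i l a * z a) - sumo (fun a => A i l a * x i a).
  rewrite -sumo_sub; apply: sumo_ext => a; ring.
ring.
Qed.

Lemma Amul_sub (A : blkA n q) (x y : bvec n) l :
  Amul A (bsub x y) l = Amul A x l - Amul A y l.
Proof.
rewrite /Amul -sumo_sub; apply: sumo_ext => i; rewrite -sumo_sub; apply: sumo_ext => a.
rewrite /bsub; ring.
Qed.

Lemma ipv_Amul (A : blkA n q) (w : vec q) (y : bvec n) :
  sumo (fun i => ipv w (Aimul A i (y i))) = ipv w (Amul A y).
Proof.
rewrite /ipv /Amul /Aimul.
transitivity (sumo (fun l => sumo (fun i => w l * sumo (fun a => A i l a * y i a)))).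
  by rewrite sumo_swap.
apply: sumo_ext => l; by rewrite sumo_scal.
Qed.

Lemma ipv_AiT (A : blkA n q) i (w : vec q) (u : vec (n i)) :
  ipv (AiT A i w) u = ipv w (Aimul A i u).
Proof.
rewrite /ipv /AiT /Aimul.
transitivity (sumo (fun a => sumo (fun l => A i l a * w l * u a))).
  apply: sumo_ext => a; rewrite Rmult_comm -sumo_scal; apply: sumo_ext => l; ring.
rewrite sumo_swap; apply: sumo_ext => l; rewrite -sumo_scal; apply: sumo_ext => a; ring.
Qed.
End Blk2.

Lemma le_t X Y : (forall t, 0 < t <= 1 -> 0 <= X + t * Y) -> 0 <= Y -> 0 <= X.
Proof.
move=> H hY; destruct (Rle_dec 0 X) as [|hn]; first done.
have hX : X < 0 by lra.
have hYX : 0 < Y - X by lra.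
have ht : 0 < - X / (Y - X) <= 1.
  split; first by apply: Rdiv_lt_0_compat; lra.
  have e : - X / (Y - X) * (Y - X) = - X by field; lra.
  nra.
have := H _ ht.
have -> : X + - X / (Y - X) * Y = - (X * X) / (Y - X) by field; lra.
move=> h.
have : 0 < (X * X) / (Y - X) by apply: Rdiv_lt_0_compat; nra.
rewrite /Rdiv in h *; lra.
Qed.

Lemma le_eps a b c : (forall eps, 0 < eps -> a <= b + eps * c) -> 0 <= c -> a <= b.
Proof.
move=> H hc; destruct (Rle_dec a b) as [|hn]; first done.
have hab : b < a by lra.
pose eps := (a - b) / (2 * (c + 1)).
have he : 0 < eps by apply: Rdiv_lt_0_compat; lra.
have := H eps he.
have e2 : eps * (2 * (c + 1)) = a - b by rewrite /eps; field; lra.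
nra.
Qed.

Section Three.
Variable k : nat.
Lemma three_point (P : 'I_k -> 'I_k -> R) (dom : vec k -> Prop) (g : vec k -> R)
  (V xi z u : vec k) :
  sym_psd P -> convex_ext dom g -> dom z -> dom u ->
  (forall u', dom u' -> ipv V z + g z + / 2 * qformv P (vsub z xi)
                        <= ipv V u' + g u' + / 2 * qformv P (vsub u' xi)) ->
  ipv V z + g z + / 2 * qformv P (vsub z xi) + / 2 * qformv P (vsub u z)
  <= ipv V u + g u + / 2 * qformv P (vsub u xi).
Proof.
move=> [Psym Ppsd] cvx hz hu hmin.
pose a := vsub z xi; pose c := vsub u z.
have key : 0 <= ipv V u + g u - (ipv V z + g z) + Bq P a c.
  apply: (le_t _ (/ 2 * qformv P c)); last by have := Ppsd c; lra.
  move=> t ht.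
  have [hd hg] := cvx u z t hu hz (conj (Rlt_le _ _ (proj1 ht)) (proj2 ht)).
  have := hmin _ hd.
  rewrite ipv_add_r !ipv_scal_r.
  rewrite (qform_ext _ P (vsub (vadd (vscale t u) (vscale (1 - t) z)) xi) (fun i => a i + t * c i)); last first.
    move=> i; rewrite /a /c /vsub /vadd /vscale; ring.
  rewrite qform_expand (Bq_sym _ P a c Psym).
  move=> h.
  have h2 : 0 <= t * (ipv V u + g u - (ipv V z + g z) + Bq P a c + t * (/ 2 * qformv P c)).
    rewrite -/a in h; nra.
  apply: (Rmult_le_reg_l t); first lra.
  lra.
rewrite (qform_ext _ P (vsub u xi) (fun i => a i + 1 * c i)); last first.
  move=> i; rewrite /a /c /vsub; ring.
rewrite qform_expand (Bq_sym _ P a c Psym).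
rewrite /a /c in key *; lra.
Qed.
End Three.

Section Anal.
Variables (m : nat) (n : 'I_m -> nat).

Lemma bvec_ext (x y : bvec n) : (forall j a, x j a = y j a) -> x = y.
Proof.
move=> H; apply: functional_extensionality_dep => j.
apply: functional_extensionality => a; exact: H.
Qed.

Lemma ipb_ge0 (h : bvec n) : 0 <= ipb h h.
Proof. rewrite -(sumo_0 m); apply: sumo_le => j; exact: ipv_ge0. Qed.

Lemma ipb_scal_r (u h : bvec n) t : ipb u (bscale t h) = t * ipb u h.
Proof. rewrite /ipb -sumo_scal; apply: sumo_ext => j; exact: ipv_scal_r. Qed.

Lemma normb_ge0 (h : bvec n) : 0 <= normb h.
Proof. exact: sqrt_pos. Qed.

Lemma sqrt_scal2 t X : 0 <= X -> sqrt (t * (t * X)) = Rabs t * sqrt X.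
Proof.
move=> hX; rewrite -Rmult_assoc sqrt_mult //; last exact: Rle_0_sqr.
by rewrite -sqrt_Rsqr_abs.
Qed.

Lemma normb_scal t (h : bvec n) : 0 <= t -> normb (bscale t h) = t * normb h.
Proof.
move=> ht; rewrite /normb.
have -> : ipb (bscale t h) (bscale t h) = t * (t * ipb h h).
  rewrite /ipb -!sumo_scal; apply: sumo_ext => j.
  rewrite (ipv_ext _ _ (vscale t (h j)) _ (vscale t (h j))) //.
  by rewrite ipv_scal_l ipv_scal_r.
by rewrite sqrt_scal2 ?Rabs_pos_eq //; exact: ipb_ge0.
Qed.

Lemma conv_grad (f : bvec n -> R) gradf : convex_fun f -> has_gradient f gradf ->
  forall x y, ipb (gradf x) (bsub y x) <= f y - f x.
Proof.
move=> cvx hg x y.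
set h := bsub y x; set N := normb h.
have hN : 0 <= N by exact: normb_ge0.
apply: (le_eps _ _ N) => // eps he.
have [d [hd Hd]] := hg x eps he.
pose t := Rmin 1 (d / (2 * (N + 1))).
have hq : 0 < d / (2 * (N + 1)) by apply: Rdiv_lt_0_compat; lra.
have ht : 0 < t <= 1.
  split; [apply: Rmin_glb_lt; lra | exact: Rmin_l].
have ht2 : t <= d / (2 * (N + 1)) by exact: Rmin_r.
have e2 : d / (2 * (N + 1)) * (2 * (N + 1)) = d by field; lra.
have htN : normb (bscale t h) < d.
  rewrite normb_scal; last lra.
  rewrite -/N; move: ht2 e2 hq; generalize (d / (2 * (N + 1))) => qq ht2 e2 hq.
  have : t * N <= qq * N by apply: Rmult_le_compat_r.
  nra.
have := Hd _ htN.
have eq : badd x (bscale t h) = badd (bscale t y) (bscale (1 - t) x).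
  apply: bvec_ext => j a; rewrite /badd /bscale /h /bsub; ring.
have := cvx y x t (conj (Rlt_le _ _ (proj1 ht)) (proj2 ht)).
rewrite -eq ipb_scal_r normb_scal; last lra.
move=> h1 h2.
have h3 := Rle_abs (- (f (badd x (bscale t h)) - f x - t * ipb (gradf x) h)).
rewrite Rabs_Ropp in h3.
apply: (Rmult_le_reg_l t); first lra.
rewrite -/N in h2; nra.
Qed.
End Anal.

Lemma quad_deriv a K t :
  derivable_pt_lim (fun s => a * s + K * (s * s)) t (a + 2 * K * t).
Proof.
have := derivable_pt_lim_plus _ _ t _ _ (derivable_pt_lim_scal _ a t _ (derivable_pt_lim_id t))
  (derivable_pt_lim_scal _ K t _ (derivable_pt_lim_mult _ _ t _ _ (derivable_pt_lim_id t) (derivable_pt_lim_id t))).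
have -> : a * 1 + K * (1 * id t + id t * 1) = a + 2 * K * t by rewrite /id; ring.
by [].
Qed.

Section Desc.
Variables (m : nat) (n : 'I_m -> nat).

Definition bzero : bvec n := fun j a => 0.

Lemma ipb_single (u : bvec n) i (v : vec (n i)) :
  ipb u (setblk bzero i v) = ipv (u i) v.
Proof.
rewrite /ipb (sumo_delta _ _ i); first by rewrite setblk_eq.
move=> j ne; rewrite setblk_ne; last by rewrite eq_sym.
apply: sumo_eq0 => a; rewrite /bzero; ring.
Qed.

Lemma normb_single i t (d : vec (n i)) :
  normb (setblk bzero i (vscale t d)) = Rabs t * normv d.
Proof.
rewrite /normb /normv ipb_single setblk_eq ipv_scal_l ipv_scal_r.
apply: sqrt_scal2; exact: ipv_ge0.
Qed.

Lemma descent (f : bvec n -> R) gradf Lc Lr (x : bvec n) i (z : vec (n i)) :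
  has_gradient f gradf -> grad_lipschitz gradf Lc Lr ->
  f (setblk x i z) <= f x + ipv (gradf x i) (vsub z (x i))
                      + Lc i / 2 * ipv (vsub z (x i)) (vsub z (x i)).
Proof.
move=> hg [hL0 [hL _]].
set d := vsub z (x i).
pose y t := addblk x i (vscale t d).
pose phi t := f (y t).
pose phi' t := ipv (gradf (y t) i) d.
set N := normv d.
have hN : 0 <= N by exact: sqrt_pos.
have Dphi : forall t, derivable_pt_lim phi t (phi' t).
  move=> t eps he.
  pose eps' := eps / (2 * (N + 1)).
  have he' : 0 < eps' by apply: Rdiv_lt_0_compat; lra.
  have e2 : eps' * (2 * (N + 1)) = eps by rewrite /eps'; field; lra.
  have [dl [hdl Hd]] := hg (y t) eps' he'.
  have hdel : 0 < dl / (N + 1) by apply: Rdiv_lt_0_compat; lra.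
  have e3 : dl / (N + 1) * (N + 1) = dl by field; lra.
  exists (mkposreal _ hdel) => h hne hh /=.
  simpl in hh.
  pose H := setblk bzero i (vscale h d).
  have eqy : y (t + h) = badd (y t) H.
    apply: bvec_ext => j; case: (eqVneq i j) => [<-|ne] a; rewrite /y /addblk /badd /H.
      rewrite !setblk_eq /vadd /vscale; ring.
    rewrite !setblk_ne // /bzero; ring.
  have hnH : normb H = Rabs h * N by rewrite /H normb_single.
  have hipH : ipb (gradf (y t)) H = h * phi' t.
    by rewrite /H ipb_single ipv_scal_r.
  have hlt : normb H < dl.
    rewrite hnH.
    have hh0 : 0 <= Rabs h by exact: Rabs_pos.
    move: hh e3 hdel; generalize (dl / (N + 1)) => qq hh e3 hdel.
    have : Rabs h * N <= qq * N by apply: Rmult_le_compat_r; lra.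
    nra.
  have := Hd _ hlt.
  rewrite -eqy hipH hnH => hb.
  rewrite /phi.
  have hah : 0 < Rabs h by exact: Rabs_pos_lt.
  have -> : (f (y (t + h)) - f (y t)) / h - phi' t
            = (f (y (t + h)) - f (y t) - h * phi' t) / h by field.
  rewrite /Rdiv Rabs_mult Rabs_inv.
  apply: (Rmult_lt_reg_r (Rabs h)) => //.
  have -> : Rabs (f (y (t + h)) - f (y t) - h * phi' t) * / Rabs h * Rabs h
            = Rabs (f (y (t + h)) - f (y t) - h * phi' t) by field; lra.
  nra.
pose l0 := ipv (gradf x i) d.
pose K := Lc i / 2 * ipv d d.
pose psi t := phi t - (l0 * t + K * (t * t)).
have Dpsi : forall t, derivable_pt_lim psi t (phi' t - (l0 + 2 * K * t)).
  move=> t; exact: (derivable_pt_lim_minus _ _ t _ _ (Dphi t) (quad_deriv l0 K t)).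
have [c [hc hc01]] := MVT_cor2 psi (fun t => phi' t - (l0 + 2 * K * t)) 0 1 Rlt_0_1
  (fun c _ => Dpsi c).
have y0 : y 0 = x.
  apply: bvec_ext => j; case: (eqVneq i j) => [<-|ne] a; rewrite /y /addblk.
    rewrite !setblk_eq /vadd /vscale; ring.
  by rewrite !setblk_ne.
have y1 : y 1 = setblk x i z.
  apply: bvec_ext => j; case: (eqVneq i j) => [<-|ne] a; rewrite /y /addblk.
    rewrite !setblk_eq /vadd /vscale /d /vsub; ring.
  by rewrite !setblk_ne.
have hLc := hL0 i.
set Dl := vsub (gradf (y c) i) (gradf x i).
have hLip : normv Dl <= Lc i * normv (vscale c d) by exact: hL.
have nD : normv Dl * normv Dl = ipv Dl Dl by apply: sqrt_sqrt; exact: ipv_ge0.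
have ncd : normv (vscale c d) * normv (vscale c d) = c * (c * ipv d d).
  rewrite sqrt_sqrt; last exact: ipv_ge0.
  by rewrite ipv_scal_l ipv_scal_r.
have hnD0 : 0 <= normv Dl by exact: sqrt_pos.
have X1 : ipv Dl Dl <= (Lc i * c) * (Lc i * c) * ipv d d.
  rewrite -nD.
  have : normv Dl * normv Dl <= (Lc i * normv (vscale c d)) * (Lc i * normv (vscale c d)).
    by apply: Rmult_le_compat.
  move=> h.
  have e : (Lc i * normv (vscale c d)) * (Lc i * normv (vscale c d))
           = Lc i * Lc i * (c * (c * ipv d d)) by rewrite -ncd; ring.
  lra.
have hB : phi' c - l0 = ipv Dl d by rewrite /Dl ipv_sub_l.
have hq : 0 <= ipv (vsub Dl (vscale (Lc i * c) d)) (vsub Dl (vscale (Lc i * c) d))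
  by exact: ipv_ge0.
have E : forall (u w : vec (n i)) kk, ipv (vsub u (vscale kk w)) (vsub u (vscale kk w))
    = ipv u u - 2 * kk * ipv u w + kk * kk * ipv w w.
  move=> u w kk; rewrite ipv_sub_l !ipv_sub_r !ipv_scal_l !ipv_scal_r (ipv_sym _ w u); ring.
rewrite E in hq.
have hk : 0 < Lc i * c by apply: Rmult_lt_0_compat; lra.
have hY : 0 <= ipv d d by exact: ipv_ge0.
have hBk : ipv Dl d <= Lc i * c * ipv d d by nra.
have hder : phi' c - (l0 + 2 * K * c) <= 0 by rewrite /K; lra.
have hpsi : psi 1 - psi 0 <= 0 by rewrite hc; nra.
move: hpsi; rewrite /psi /phi y0 y1 /l0 /K; lra.
Qed.
End Desc.

Section PerI.
Variables (m : nat) (n : 'I_m -> nat) (q : nat).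

Lemma Aimul_sub (A : blkA n q) i (u v : vec (n i)) l :
  Aimul A i (vsub u v) l = Aimul A i u l - Aimul A i v l.
Proof. rewrite /Aimul -sumo_sub; apply: sumo_ext => a; rewrite /vsub; ring. Qed.

Lemma per_i (f : bvec n -> R) gradf (g : forall i : 'I_m, vec (n i) -> R)
  (dom : forall i : 'I_m, vec (n i) -> Prop) (A : blkA n q) (Lc : 'I_m -> R) Lr beta rho
  (P : forall i : 'I_m, 'I_(n i) -> 'I_(n i) -> R) (s : state n q) (xb : bvec n) i
  (z : vec (n i)) :
  has_gradient f gradf -> grad_lipschitz gradf Lc Lr -> sym_psd (P i) ->
  convex_ext (dom i) (g i) -> dom i (xb i) ->
  is_argmin_blk gradf g dom A beta P s i z ->
  let s1 := alg_step A rho s i z in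
  let Pm := blkdiag n P in
  let M := bmsub (bmsub Pm (Lmat n Lc)) (bmscale beta (AtA A)) in
  (Fobj f g (sx s1) - Fobj f g xb - ipv (sl s1) (sr s1)
     + (beta - rho) * ipv (sr s1) (sr s1) - beta / 2 * ipv (sr s1) (sr s1))
  + / 2 * (qformb Pm (bsub (sx s1) xb) + qformb M (bsub (sx s1) (sx s)))
  <= f (sx s) + sumo (fun j => g j (sx s j)) - Fobj f g xb
     + ipv (gradf (sx s) i) (vsub (xb i) (sx s i)) - g i (sx s i) + g i (xb i)
     - ipv (vsub (sl s) (vscale beta (sr s))) (Aimul A i (vsub (xb i) (sx s i)))
     - ipv (sl s) (sr s) + beta / 2 * ipv (sr s) (sr s)
     + / 2 * qformb Pm (bsub (sx s) xb).
Proof.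
move=> hg hL hP cvx hxb [hz hmin] s1 Pm M.
rewrite /s1 /alg_step /=.
set x := sx s; set r := sr s; set lam := sl s.
set d := vsub z (x i); set e := Aimul A i d.
set w := vsub lam (vscale beta r).
set p := vsub (xb i) (x i); set pe := Aimul A i p.
set v := gradf x i.
rewrite /Fobj (sumo_setblk _ _ x i z g).
have hD := descent _ _ f gradf Lc Lr x i z hg hL.
rewrite -/d -/v in hD.
have tp := three_point _ (P i) (dom i) (g i) (vsub v (AiT A i w)) (x i) z (xb i) hP cvx hz hxb hmin.
rewrite !ipv_sub_l !ipv_AiT in tp.
have Ez : ipv v z = ipv v d + ipv v (x i) by rewrite /d ipv_sub_r; ring.
have Exb : ipv v (xb i) = ipv v p + ipv v (x i) by rewrite /p ipv_sub_r; ring.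
have Eaz : ipv w (Aimul A i z) = ipv w e + ipv w (Aimul A i (x i)).
  rewrite /e /d (ipv_ext _ w w (Aimul A i (vsub z (x i))) (vsub (Aimul A i z) (Aimul A i (x i)))) //.
    rewrite ipv_sub_r; ring.
  by move=> l; rewrite Aimul_sub.
have Eaxb : ipv w (Aimul A i (xb i)) = ipv w pe + ipv w (Aimul A i (x i)).
  rewrite /pe /p (ipv_ext _ w w (Aimul A i (vsub (xb i) (x i))) (vsub (Aimul A i (xb i)) (Aimul A i (x i)))) //.
    rewrite ipv_sub_r; ring.
  by move=> l; rewrite Aimul_sub.
rewrite Ez Exb Eaz Eaxb in tp.
have EPm : qformb Pm (bsub (setblk x i z) xb)
   = qformb Pm (bsub x xb) - qformv (P i) p + qformv (P i) (vsub (xb i) z).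
  rewrite /Pm !qformb_blkdiag (sumo_upd _ (fun j => qformv (P j) (bsub x xb j)) _ i).
    rewrite /p (qform_neg _ _ (x i)) (qform_neg _ _ (xb i) z).
    congr (_ - _ + _); apply: qform_ext => a; by rewrite /bsub setblk_eq.
  move=> j ne; apply: qform_ext => a; rewrite /bsub setblk_ne // eq_sym //.
have hy : forall j, j != i -> forall a, bsub (setblk x i z) x j a = 0.
  move=> j ne a; rewrite /bsub setblk_ne ?(eq_sym i) //; ring.
have hyi : bsub (setblk x i z) x i = d.
  apply: functional_extensionality => a; by rewrite /bsub setblk_eq.
have EM : qformb M (bsub (setblk x i z) x) = qformv (P i) d - Lc i * ipv d d - beta * ipv e e.
  rewrite /M !qformb_sub qformb_scal /Pm (qformb_single_diag _ _ _ _ i hy) /Lmat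
    (qformb_single_diag _ _ _ _ i hy) (qformb_single_AtA _ _ _ _ _ i hy) hyi qformv_diag.
  done.
rewrite EPm EM.
have E1 : ipv (vsub lam (vscale rho (vadd r e))) (vadd r e)
   = ipv lam r + ipv lam e - rho * (ipv r r + 2 * ipv r e + ipv e e).
  rewrite ipv_sub_l ipv_scal_l !ipv_add_r !ipv_add_l (ipv_sym _ e r); ring.
have E2 : ipv (vadd r e) (vadd r e) = ipv r r + 2 * ipv r e + ipv e e.
  rewrite !ipv_add_r !ipv_add_l (ipv_sym _ e r); ring.
have E3 : ipv w e = ipv lam e - beta * ipv r e by rewrite /w ipv_sub_l ipv_scal_l.
rewrite E1 E2.
rewrite E3 in tp.
rewrite -/d -/p in tp.
lra.
Qed.
End PerI.

Lemma sumo_R k K1 K2 K3 K4 (a u v c : 'I_k -> R) :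
  sumo (fun i => K1 + a i - u i + v i - c i - K2 + K3 + K4)
  = INR k * (K1 - K2 + K3 + K4) + sumo a - sumo u + sumo v - sumo c.
Proof.
rewrite -(sumo_const k (K1 - K2 + K3 + K4)).
rewrite -sumo_add -sumo_sub -sumo_add -sumo_sub.
apply: sumo_ext => i; ring.
Qed.

Lemma traj_inv (m : nat) (n : 'I_m -> nat) (q : nat) gradf g dom (A : blkA n q) b beta rho P
  (x0 : bvec n) (sel : seq 'I_m -> forall i : 'I_m, vec (n i)) :
  (forall i, dom i (x0 i)) ->
  (forall (h : seq 'I_m) (i : 'I_m),
     is_argmin_blk gradf g dom A beta P (alg_traj A b rho x0 sel h) i (sel h i)) ->
  forall h, (forall l, sr (alg_traj A b rho x0 sel h) l
                       = Amul A (sx (alg_traj A b rho x0 sel h)) l - b l)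
            /\ (forall i, dom i (sx (alg_traj A b rho x0 sel h) i)).
Proof.
move=> h0 hsel; elim=> [|i h [IHr IHd]] /=.
  by split.
split.
  move=> l; rewrite /vadd Amul_setblk IHr; ring.
move=> j; case: (eqVneq i j) => [<-|ne].
  rewrite setblk_eq; exact: (proj1 (hsel h i)).
by rewrite setblk_ne.
Qed.

Theorem mainTheorem4
  (m : nat) (n : 'I_m -> nat) (q : nat)
  (f : bvec n -> R) (gradf : bvec n -> bvec n)
  (g : forall i : 'I_m, vec (n i) -> R) (dom : forall i : 'I_m, vec (n i) -> Prop)
  (A : blkA n q) (b : vec q) (Lc : 'I_m -> R) (Lr : R)
  (beta rho : R) (P : forall i : 'I_m, 'I_(n i) -> 'I_(n i) -> R)
  (x0 : bvec n) (sel : seq 'I_m -> forall i : 'I_m, vec (n i)) :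
  (0 < m)%nat ->
  convex_fun f -> has_gradient f gradf -> continuous_grad gradf ->
  grad_lipschitz gradf Lc Lr ->
  (forall i, proper_ext (dom i) /\ convex_ext (dom i) (g i) /\ lsc_ext (dom i) (g i)) ->
  0 < beta -> 0 < rho ->
  (forall i, sym_psd (P i)) ->
  (forall i, dom i (x0 i)) ->
  (* each update picks a minimizer of the block subproblem *)
  (forall (h : seq 'I_m) (i : 'I_m),
     is_argmin_blk gradf g dom A beta P (alg_traj A b rho x0 sel h) i (sel h i)) ->
  forall (h : seq 'I_m) (x : bvec n),
    (forall l, Amul A x l = b l) -> (forall i, dom i (x i)) ->
    let s := alg_traj A b rho x0 sel h in
    let s1 (i : 'I_m) := alg_step A rho s i (sel h i) in
    let Pm := @blkdiag m n P in
    let M := bmsub (bmsub Pm (Lmat n Lc)) (bmscale beta (AtA A)) in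
    Eunif (fun i => Fobj f g (sx (s1 i)) - Fobj f g x - ipv (sl (s1 i)) (sr (s1 i))
                    + (beta - rho) * ipv (sr (s1 i)) (sr (s1 i))
                    - beta / 2 * ipv (sr (s1 i)) (sr (s1 i)))
    + / 2 * Eunif (fun i => qformb Pm (bsub (sx (s1 i)) x)
                            + qformb M (bsub (sx (s1 i)) (sx s)))
    <= (1 - / INR m) * (Fobj f g (sx s) - Fobj f g x - ipv (sl s) (sr s)
                        + beta * ipv (sr s) (sr s))
       - beta / 2 * ipv (sr s) (sr s) + / 2 * qformb Pm (bsub (sx s) x).
Proof.
move=> hm cvxf hg _ hL hgi hbeta hrho hP hx0 hsel h xb hAx hxb s s1 Pm M.
have [hr _] := traj_inv _ _ _ gradf g dom A b beta rho P x0 sel hx0 hsel h.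
rewrite -/s in hr.
have per : forall i : 'I_m, _ := fun i =>
  per_i _ _ _ f gradf g dom A Lc Lr beta rho P s xb i (sel h i) hg hL (hP i)
    (proj1 (proj2 (hgi i))) (hxb i) (hsel h i).
rewrite /Eunif.
match goal with |- / INR m * sumo ?F1 + / 2 * (/ INR m * sumo ?F2) <= _ =>
  (have E0 : sumo (fun i => F1 i + / 2 * F2 i) = sumo F1 + / 2 * sumo F2
    by rewrite -sumo_scal -sumo_add);
  have E : / INR m * sumo F1 + / 2 * (/ INR m * sumo F2)
           = / INR m * sumo (fun i => F1 i + / 2 * F2 i)
    by rewrite E0; ring
end.
rewrite E; clear E.
have S := sumo_le _ _ _ per.
rewrite sumo_R in S.
match goal with |- / INR m * ?LS <= _ => have S2 := (S : LS <= _) end.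
clear S.
have ca : sumo (fun i => ipv (gradf (sx s) i) (vsub (xb i) (sx s i))) <= f xb - f (sx s)
  := conv_grad _ _ f gradf cvxf hg (sx s) xb.
have cs : sumo (fun i => ipv (vsub (sl s) (vscale beta (sr s)))
                              (Aimul A i (vsub (xb i) (sx s i))))
          = - (ipv (sl s) (sr s) - beta * ipv (sr s) (sr s)).
  transitivity (ipv (vsub (sl s) (vscale beta (sr s))) (Amul A (bsub xb (sx s)))).
    exact: ipv_Amul.
  rewrite (ipv_ext _ _ (vsub (sl s) (vscale beta (sr s))) _ (vscale (-1) (sr s))) //.
    rewrite ipv_scal_r ipv_sub_l ipv_scal_l; ring.
  by move=> l; rewrite Amul_sub hAx /vscale hr; ring.
rewrite cs in S2.
have hmR : 0 < INR m by apply: lt_0_INR; apply/ssrnat.ltP.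
have hu : / INR m * INR m = 1 by field; lra.
have hu0 : 0 < / INR m by apply: Rinv_0_lt_compat.
move: S2 ca hu hu0; rewrite /Fobj.
generalize (/ INR m) (INR m).
move=> u mm S2 ca hu hu0.
rewrite -/Pm in S2.
have h1 := Rmult_le_compat_l _ _ _ (Rlt_le _ _ hu0) S2.
have h2 := Rmult_le_compat_l _ _ _ (Rlt_le _ _ hu0) ca.
move: h1 h2.
match goal with |- / mm * ?LS <= _ -> _ => generalize LS end.
generalize (sumo (fun i : 'I_m => ipv (gradf (sx s) i) (vsub (xb i) (sx s i)))).
generalize (sumo (fun i : 'I_m => g i (sx s i))) (sumo (fun i : 'I_m => g i (xb i))).
generalize (ipv (sl s) (sr s)) (ipv (sr s) (sr s)) (qformb Pm (bsub (sx s) xb)).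
generalize (f (sx s)) (f xb).
clear -hu hu0.
move=> fx fxb lr rr Q Gx Gxb SA LS h1 h2.
have e : / mm * (mm * (fx + Gx - (fxb + Gxb) - lr + beta / 2 * rr + / 2 * Q) + SA - Gx + Gxb - - (lr - beta * rr))
  = (/ mm * mm) * (fx + Gx - (fxb + Gxb) - lr + beta / 2 * rr + / 2 * Q)
    + / mm * (SA - Gx + Gxb + (lr - beta * rr)) by ring.
rewrite e hu in h1.
move: h1 h2 hu0; generalize (/ mm) => u h1 h2 hu0.
nra.
Qed.
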